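(* Let $\gamma\in\mathcal{M}_k\otimes\mathcal{M}_m$ be a state and $W\in\mathcal{M}_k$ an orthogonal projection. Then $F_\gamma\circ G_\gamma(W\mathcal{M}_kW)\subseteq W\mathcal{M}_kW$ if and only if there is an orthogonal projection $V\in\mathcal{M}_m$ such that $\mathrm{tr}(\gamma(W\otimes V^\perp))=\mathrm{tr}(\gamma(W^\perp\otimes V))=0$.
   Context: $\mathcal{M}_k$ denotes the complex $k\times k$ matrices, and $\mathcal{M}_k\otimes\mathcal{M}_m$ is identified with $\mathcal{M}_{km}$ via the Kronecker product. A state is a positive semidefinite Hermitian matrix (not necessarily of trace one). For an orthogonal projection $W$, $W^\perp=\mathrm{Id}-W$, and $W\mathcal{M}_kW=\{WXW:X\in\mathcal{M}_k\}$. For $\gamma=\sum_{i=1}^n A_i\otimes B_i\in\mathcal{M}_k\otimes\mathcal{M}_m$ define $G_\gamma:\mathcal{M}_k\to\mathcal{M}_m$, $G_\gamma(X)=\sum_i\mathrm{tr}(A_iX)B_i$, and $F_\gamma:\mathcal{M}_m\to\mathcal{M}_k$, $F_\gamma(Y)=\sum_i\mathrm{tr}(B_iY)A_i$ (independent of the chosen decomposition). *)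

(* Defs.v *)
From HB Require Import structures.
From mathcomp Require Import all_boot all_order all_algebra.
From mathcomp Require Import complex mxtens.
From mathcomp Require Import reals.
Set Implicit Arguments. Unset Strict Implicit. Unset Printing Implicit Defensive.
Import Order.TTheory GRing.Theory Num.Theory.
Local Open Scope ring_scope.

Section Defs.
Variable C : numClosedFieldType.

Definition adjmx {p q} (A : 'M[C]_(p, q)) : 'M[C]_(q, p) :=
  \matrix_(i, j) (A j i)^*.

(* state: positive semidefinite Hermitian matrix (trace not normalised) *)
Definition is_state {n} (A : 'M[C]_n) : Prop :=
  adjmx A = A /\ forall v : 'cV[C]_n, 0 <= (adjmx v *m A *m v) 0 0.

Definition is_orth_proj {n} (W : 'M[C]_n) : Prop :=
  W *m W = W /\ adjmx W = W.

Definition in_corner {n} (W X : 'M[C]_n) : Prop :=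
  exists Y : 'M[C]_n, X = W *m Y *m W.

(* gamma = \sum_(i,j) delta_mx i j *t blk gamma i j  (Kronecker product,
   index (i,a) of M_k (x) M_m = M_(k*m) is mxtens_index (i,a) = i*m+a) *)
Definition blk {k m} (gamma : 'M[C]_(k * m)) (i j : 'I_k) : 'M[C]_m :=
  \matrix_(a, b) gamma (mxtens_index (i, a)) (mxtens_index (j, b)).

(* G_gamma(X) = sum tr(A_i X) B_i for the decomposition above *)
Definition Gmap {k m} (gamma : 'M[C]_(k * m)) (X : 'M[C]_k) : 'M[C]_m :=
  \sum_(i < k) \sum_(j < k) \tr (delta_mx i j *m X) *: blk gamma i j.

(* F_gamma(Y) = sum tr(B_i Y) A_i for the decomposition above *)
Definition Fmap {k m} (gamma : 'M[C]_(k * m)) (Y : 'M[C]_m) : 'M[C]_k :=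
  \sum_(i < k) \sum_(j < k) \tr (blk gamma i j *m Y) *: delta_mx i j.

End Defs.

(* Main.v *)
Require Import Defs.
From HB Require Import structures.
From mathcomp Require Import all_boot all_order all_algebra.
From mathcomp Require Import complex mxtens.
From mathcomp Require Import reals.
From mathcomp Require Import sesquilinear spectral.
Import Order.TTheory GRing.Theory Num.Theory.
Local Open Scope ring_scope.
Set Implicit Arguments. Unset Strict Implicit. Unset Printing Implicit Defensive.

Section Gen.
Variable C : numClosedFieldType.

Lemma adjmxE p q (A : 'M[C]_(p, q)) (i : 'I_q) (j : 'I_p) : adjmx A i j = (A j i)^*.
Proof. by rewrite mxE. Qed.

Lemma adjmxK p q (A : 'M[C]_(p, q)) : adjmx (adjmx A) = A.
Proof. by apply/matrixP=> i j; rewrite !mxE conjCK. Qed.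

Lemma adjmxM p q r (A : 'M[C]_(p, q)) (B : 'M[C]_(q, r)) :
  adjmx (A *m B) = adjmx B *m adjmx A.
Proof.
apply/matrixP=> i j; rewrite !mxE rmorph_sum; apply: eq_bigr => l _.
by rewrite !mxE rmorphM mulrC.
Qed.

Lemma adjmxD p q (A B : 'M[C]_(p, q)) : adjmx (A + B) = adjmx A + adjmx B.
Proof. by apply/matrixP=> i j; rewrite !mxE rmorphD. Qed.

Lemma adjmxB p q (A B : 'M[C]_(p, q)) : adjmx (A - B) = adjmx A - adjmx B.
Proof. by apply/matrixP=> i j; rewrite !mxE rmorphB. Qed.

Lemma adjmx1 p : adjmx (1%:M : 'M[C]_p) = 1%:M.
Proof. by apply/matrixP=> i j; rewrite !mxE eq_sym; case: (_ == _); rewrite ?rmorph1 ?rmorph0. Qed.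

Lemma adjmx_tens p q r s (A : 'M[C]_(p, q)) (B : 'M[C]_(r, s)) :
  adjmx (A *t B) = adjmx A *t adjmx B.
Proof. by apply/matrixP=> i j; rewrite !mxE rmorphM. Qed.

Lemma tensmxBr p q r s (A : 'M[C]_(p, q)) (B D : 'M[C]_(r, s)) :
  A *t (B - D) = A *t B - A *t D.
Proof. by apply/matrixP=> i j; rewrite !mxE mulrBr. Qed.

Lemma tensmxBl p q r s (A D : 'M[C]_(p, q)) (B : 'M[C]_(r, s)) :
  (A - D) *t B = A *t B - D *t B.
Proof. by apply/matrixP=> i j; rewrite !mxE mulrBl. Qed.

Lemma tr_adj_eq0 p q (A : 'M[C]_(p, q)) : \tr (A *m adjmx A) = 0 -> A = 0.
Proof.
rewrite /mxtrace => H; apply/matrixP=> i j.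
suff HA : A i j = 0 by rewrite HA mxE.
have Hnn : forall l t, 0 <= A l t * adjmx A t l.
  by move=> l t; rewrite mxE mul_conjC_ge0.
have H2 : (A *m adjmx A) i i = 0.
  apply: (psumr_eq0P _ H) => // l _; rewrite mxE; exact: sumr_ge0.
rewrite mxE in H2.
have H3 := psumr_eq0P (fun t _ => Hnn i t) H2 (isT : predT j).
by move/eqP: (H3 j); rewrite mxE mul_conjC_eq0 => /eqP.
Qed.

Lemma tr_ext p q (A B : 'M[C]_(p, q)) :
  (forall D : 'M[C]_(q, p), \tr (A *m D) = \tr (B *m D)) -> A = B.
Proof.
move=> H; apply/matrixP=> i j; have := H (delta_mx j i).
rewrite /mxtrace (bigD1 i) //= [in RHS](bigD1 i) //= !big1.
- rewrite !mxE (bigD1 j) //= [in RHS](bigD1 j) //= !big1.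
  + by rewrite !mxE !eqxx !mulr1 !addr0.
  + by move=> l /negbTE hl; rewrite !mxE hl mulr0.
  + by move=> l /negbTE hl; rewrite !mxE hl mulr0.
- by move=> l /negbTE hl; rewrite mxE big1 // => t _; rewrite mxE hl andbF mulr0.
- by move=> l /negbTE hl; rewrite mxE big1 // => t _; rewrite mxE hl andbF mulr0.
Qed.


Lemma adjmx_t p q (A : 'M[C]_(p, q)) : adjmx A = map_mx Num.conj (trmx A).
Proof. by apply/matrixP=> i j; rewrite !mxE. Qed.

Lemma state_fact n (A : 'M[C]_n) : is_state A -> exists L : 'M[C]_n, A = adjmx L *m L.
Proof.
move=> [Ah Apos].
have Aherm : A \is hermsymmx.
  rewrite is_hermitianmxE expr0 scale1r; apply/eqP/matrixP => i j.
  by rewrite -{1}Ah !mxE.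
have /orthomx_spectralP := hermitian_normalmx Aherm.
set P := spectralmx A; set d := spectral_diag A => HA.
have Pu : P \is unitarymx by exact: spectral_unitarymx.
have Pinv : invmx P = adjmx P by rewrite (invmx_unitary Pu) adjmx_t.
have PPa : P *m adjmx P = 1%:M by rewrite -Pinv mulmxV // unitarymx_unit.
rewrite Pinv in HA.
have dpos : forall i, 0 <= d 0 i.
  move=> i; have := Apos (adjmx (row i P)).
  rewrite adjmxK HA !mulmxA -row_mul PPa -!mulmxA.
  have -> : P *m adjmx (row i P) = adjmx (row i (1%:M : 'M[C]_n)).
    by rewrite -(adjmxK P) -adjmxM -row_mul adjmxK PPa.
  rewrite mulmxA -row_mul mul1mx mxE (bigD1 i) //= big1 ?addr0.
    by rewrite !mxE !eqxx mulr1n rmorph1 mulr1.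
  by move=> l /negbTE hl; rewrite !mxE [i == l]eq_sym hl mulr0n mul0r.
pose s := \row_j sqrtC (d 0 j).
exists (diag_mx s *m P).
rewrite adjmxM HA -!mulmxA; congr (_ *m _); rewrite mulmxA; congr (_ *m _).
apply/matrixP => i j; rewrite !mxE (bigD1 i) //= big1 ?addr0.
  rewrite !mxE eqxx mulr1n; have [->|hij] := eqVneq i j; last by rewrite !mulr0n mulr0.
  by rewrite !mulr1n geC0_conj ?sqrtC_ge0 // -expr2 sqrtCK.
by move=> l /negbTE hl; rewrite !mxE hl mulr0n rmorph0 mul0r.
Qed.

Lemma tr_proj_eq0 n p (L : 'M[C]_(p, n)) (P : 'M[C]_n) :
  is_orth_proj P -> \tr (adjmx L *m L *m P) = 0 -> L *m P = 0.
Proof.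
move=> [PP Ph] H; apply: tr_adj_eq0.
by rewrite adjmxM Ph mulmxA -(mulmxA L) PP mxtrace_mulC mulmxA.
Qed.

Lemma orth_proj_compl n (P : 'M[C]_n) : is_orth_proj P -> is_orth_proj (1%:M - P).
Proof.
move=> [PP Ph]; split; last by rewrite adjmxB adjmx1 Ph.
by rewrite mulmxBl mul1mx mulmxBr mulmx1 PP subrr subr0.
Qed.

Lemma orth_proj_tens p q (P : 'M[C]_p) (Q : 'M[C]_q) :
  is_orth_proj P -> is_orth_proj Q -> is_orth_proj (P *t Q).
Proof.
by move=> [PP Ph] [QQ Qh]; split; rewrite ?tensmx_mul ?PP ?QQ // adjmx_tens Ph Qh.
Qed.

End Gen.

Section Tens.
Variable C : numClosedFieldType.
Lemma sum_tensg (k m : nat) (F : 'I_(k * m) -> C) :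
  \sum_(p : 'I_(k * m)) F p = \sum_(i < k) \sum_(a < m) F (mxtens_index (i, a)).
Proof.
rewrite (reindex (@mxtens_index k m)) /=; last first.
  by apply: onW_bij; exists (@mxtens_unindex k m); [exact: mxtens_indexK|exact: mxtens_unindexK].
by rewrite pair_big /=; apply: eq_bigr => [[i a]] _.
Qed.

Variables k m : nat.

Lemma sum_tens (F : 'I_(k * m) -> C) :
  \sum_(p : 'I_(k * m)) F p = \sum_(i < k) \sum_(a < m) F (mxtens_index (i, a)).
Proof.
rewrite (reindex (@mxtens_index k m)) /=; last first.
  by apply: onW_bij; exists (@mxtens_unindex k m); [exact: mxtens_indexK|exact: mxtens_unindexK].
by rewrite pair_big /=; apply: eq_bigr => [[i a]] _.
Qed.

Lemma trdelta n (i j : 'I_n) (X : 'M[C]_n) : \tr (delta_mx i j *m X) = X j i.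
Proof.
rewrite /mxtrace (bigD1 i) //= big1 ?addr0.
  rewrite mxE (bigD1 j) //= big1 ?addr0; first by rewrite !mxE !eqxx mul1r.
  by move=> l /negbTE hl; rewrite !mxE hl andbF mul0r.
move=> l /negbTE hl; rewrite mxE big1 // => t _.
by rewrite mxE [l == i]hl mul0r.
Qed.

Lemma Gtr (gamma : 'M[C]_(k * m)) (X : 'M[C]_k) (D : 'M[C]_m) :
  \tr (Gmap gamma X *m D) = \tr (gamma *m (X *t D)).
Proof.
rewrite /Gmap mulmx_suml raddf_sum /=.
under eq_bigr do rewrite mulmx_suml raddf_sum /=.
under eq_bigr do under eq_bigr do rewrite -scalemxAl mxtraceZ trdelta.
rewrite /mxtrace sum_tens; apply: eq_bigr => i _.
symmetry; rewrite (eq_bigr (fun a => \sum_q gamma (mxtens_index (i, a)) q * (X *t D) q (mxtens_index (i, a)))); last by move=> a _; rewrite mxE.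
under eq_bigr => a _ do rewrite sum_tens.
rewrite exchange_big; apply: eq_bigr => j _.
rewrite mulr_sumr; apply: eq_bigr => a _.
rewrite mxE mulr_sumr; apply: eq_bigr => b _.
by rewrite (tensmxE X D j (b : 'I_m) i a) [blk _ _ _ _ _]mxE mulrCA.
Qed.


Lemma Ftr (gamma : 'M[C]_(k * m)) (X : 'M[C]_k) (D : 'M[C]_m) :
  \tr (X *m Fmap gamma D) = \tr (gamma *m (X *t D)).
Proof.
rewrite -Gtr /Fmap /Gmap mulmx_sumr mulmx_suml !raddf_sum; apply: eq_bigr => i _.
rewrite mulmx_sumr mulmx_suml !raddf_sum; apply: eq_bigr => j _ /=.
rewrite -scalemxAr -scalemxAl !mxtraceZ [\tr (X *m _)]mxtrace_mulC trdelta.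
by rewrite mulrC.
Qed.

Definition rowsOf n (K : 'M[C]_(n, k * m)) : 'M[C]_(n * k, m) :=
  \matrix_(q, b) K (mxtens_unindex q).1 (mxtens_index ((mxtens_unindex q).2, b)).

Lemma rowsOfE n (K : 'M[C]_(n, k * m)) r j b :
  rowsOf K (mxtens_index (r, j)) b = K r (mxtens_index (j, b)).
Proof. by rewrite mxE mxtens_indexK. Qed.

Lemma rowsOf_mul n (K : 'M[C]_(n, k * m)) (Y : 'M[C]_m) :
  rowsOf (K *m (1%:M *t Y)) = rowsOf K *m Y.
Proof.
apply/matrixP => q b; case: (mxtens_indexP q) => r j.
rewrite rowsOfE [LHS]mxE [RHS]mxE sum_tens (bigD1 j) //= [X in _ + X]big1 ?addr0.
  apply: eq_bigr => a _; rewrite rowsOfE.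
  by rewrite (tensmxE (1%:M : 'M[C]_k) Y j a j b) [1%:M _ _]mxE eqxx mul1r.
move=> i /negbTE hi; rewrite big1 // => a _.
by rewrite (tensmxE (1%:M : 'M[C]_k) Y i a j b) [1%:M _ _]mxE hi mul0r mulr0.
Qed.

Lemma rowsOf0 n (K : 'M[C]_(n, k * m)) : rowsOf K = 0 -> K = 0.
Proof.
move=> H; apply/matrixP => r p; case: (mxtens_indexP p) => j b.
move/matrixP: H => /(_ (mxtens_index (r, j)) b); rewrite rowsOfE => ->.
by rewrite !mxE.
Qed.

Lemma tr_rowsOf n (A B : 'M[C]_(n, k * m)) :
  \tr (A *m adjmx B) = \tr (rowsOf A *m adjmx (rowsOf B)).
Proof.
rewrite /mxtrace (@sum_tensg n k); apply: eq_bigr => r _.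
rewrite [LHS]mxE sum_tens; apply: eq_bigr => j _.
rewrite [RHS]mxE; apply: eq_bigr => b _.
by rewrite [adjmx B _ _]mxE [adjmx (rowsOf B) _ _]mxE !rowsOfE.
Qed.

End Tens.

Section Main.
Variable C : numClosedFieldType.

Lemma sandwich2 n p (L : 'M[C]_(p, n)) (P Z : 'M[C]_n) : adjmx P = P ->
  \tr (adjmx L *m L *m (P *m Z *m P)) = \tr ((L *m P) *m Z *m adjmx (L *m P)).
Proof.
move=> hP; rewrite adjmxM hP -mulmxA mxtrace_mulC !mulmxA.
by rewrite -(mulmxA _ Z P) -(mulmxA L).
Qed.

Lemma sandwich n p (L : 'M[C]_(p, n)) (P Q Z : 'M[C]_n) :
  L *m P = L *m Q -> adjmx P = P -> adjmx Q = Q ->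
  \tr (adjmx L *m L *m (P *m Z *m P)) = \tr (adjmx L *m L *m (Q *m Z *m Q)).
Proof. by move=> E hP hQ; rewrite !sandwich2 // E. Qed.

Lemma proj_ortho_adj p n (U : 'M[C]_(p, n)) : adjmx (proj_ortho U) = proj_ortho U.
Proof.
have h1 := proj_ortho_sub U (1%:M : 'M[C]_n).
have h2 := proj_ortho_compl_sub U (1%:M : 'M[C]_n).
rewrite mul1mx in h1 h2.
have /orthomx1P h3 := h2.
have [X hX] := submxP h1.
have E : (1%:M - proj_ortho U) *m adjmx (proj_ortho U) = 0.
  by rewrite {2}hX adjmxM mulmxA adjmx_t h3 mul0mx.
have E2 : adjmx (proj_ortho U) = proj_ortho U *m adjmx (proj_ortho U).
  by apply/eqP; rewrite -subr_eq0 -{1}(mul1mx (adjmx (proj_ortho U))) -mulmxBl E.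
by rewrite E2 -{1}(adjmxK (proj_ortho U)) -adjmxM -E2 adjmxK.
Qed.

Lemma trL0 n p (L : 'M[C]_(p, n)) (P : 'M[C]_n) :
  L *m P = 0 -> \tr (adjmx L *m L *m P) = 0.
Proof. by move=> h; rewrite -mulmxA h mulmx0 mxtrace0. Qed.

Theorem main_gen (k m : nat)
  (gamma : 'M[C]_(k * m)) (W : 'M[C]_k) :
  is_state gamma -> is_orth_proj W ->
  ((forall X : 'M[C]_k, in_corner W X -> in_corner W (Fmap gamma (Gmap gamma X)))
   <->
   exists V : 'M[C]_m, is_orth_proj V /\
     \tr (gamma *m (W *t (1%:M - V))) = 0 /\
     \tr (gamma *m ((1%:M - W) *t V)) = 0).
Proof.
move=> Hs HW; have [L HL] := state_fact Hs.
have [WW Wh] := HW.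
have hW1 : adjmx (W *t (1%:M : 'M[C]_m)) = W *t 1%:M by rewrite adjmx_tens Wh adjmx1.
split.
- move=> H.
  have [Y HY] : in_corner W (Fmap gamma (Gmap gamma W)).
    by apply: H; exists 1%:M; rewrite mulmx1 WW.
  pose K := L *m (W *t (1%:M : 'M[C]_m)).
  pose K' := L *m ((1%:M - W) *t (1%:M : 'M[C]_m)).
  pose R := rowsOf K; pose R' := rowsOf K'.
  have [WW' Wh'] := orth_proj_compl HW.
  have hW1' : adjmx ((1%:M - W) *t (1%:M : 'M[C]_m)) = (1%:M - W) *t 1%:M.
    by rewrite adjmx_tens Wh' adjmx1.
  have GW : Gmap gamma W = adjmx R *m R.
    apply: tr_ext => D; rewrite Gtr.
    have -> : W *t D = (W *t 1%:M) *m (1%:M *t D) *m (W *t 1%:M).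
      by rewrite !tensmx_mul mulmx1 WW mul1mx mulmx1.
    rewrite HL sandwich2 // -/K tr_rowsOf rowsOf_mul -/R.
    by rewrite -[in RHS]mulmxA [in RHS]mxtrace_mulC.
  have Hortho : R' *m adjmx R = 0.
    apply: tr_adj_eq0.
    have : \tr ((1%:M - W) *m Fmap gamma (Gmap gamma W)) = 0.
      by rewrite HY !mulmxA mulmxBl mul1mx WW subrr !mul0mx mxtrace0.
    rewrite Ftr.
    have -> : (1%:M - W) *t Gmap gamma W =
      ((1%:M - W) *t 1%:M) *m (1%:M *t Gmap gamma W) *m ((1%:M - W) *t 1%:M).
      by rewrite !tensmx_mul mulmx1 WW' mul1mx mulmx1.
    rewrite GW HL sandwich2 // -/K' tr_rowsOf rowsOf_mul -/R'.
    by rewrite adjmxM adjmxK !mulmxA.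
  exists (proj_ortho R); split; first by split; [exact: proj_ortho_proj|exact: proj_ortho_adj].
  have RV : R *m proj_ortho R = R by apply: proj_ortho_id; exact: submx_refl.
  have R'V : R' *m proj_ortho R = 0.
    by apply: proj_ortho_0; apply/orthomx1P; rewrite -adjmx_t.
  split; rewrite HL; apply: trL0.
  + have -> : W *t (1%:M - proj_ortho R) = (W *t 1%:M) *m (1%:M *t (1%:M - proj_ortho R)).
      by rewrite tensmx_mul mulmx1 mul1mx.
    rewrite mulmxA -/K; apply: rowsOf0; rewrite rowsOf_mul -/R.
    by rewrite mulmxBr mulmx1 RV subrr.
  + have -> : (1%:M - W) *t proj_ortho R = ((1%:M - W) *t 1%:M) *m (1%:M *t proj_ortho R).
      by rewrite tensmx_mul mulmx1 mul1mx.
    by rewrite mulmxA -/K'; apply: rowsOf0; rewrite rowsOf_mul -/R'.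
- move=> [V [[VV Vh] [h1 h2]]] X [Y ->].
  have L1 : L *m (W *t (1%:M - V)) = 0.
    apply: tr_proj_eq0; last by rewrite -HL.
    by apply: orth_proj_tens => //; apply: orth_proj_compl.
  have L2 : L *m ((1%:M - W) *t V) = 0.
    apply: tr_proj_eq0; last by rewrite -HL.
    by apply: orth_proj_tens => //; apply: orth_proj_compl.
  have E1 : L *m (W *t 1%:M) = L *m (W *t V).
    by apply/eqP; rewrite -subr_eq0 -mulmxBr -tensmxBr L1.
  have E2 : L *m (1%:M *t V) = L *m (W *t V).
    by apply/eqP; rewrite -subr_eq0 -mulmxBr -tensmxBl L2.
  have hWV : adjmx (W *t V) = W *t V by rewrite adjmx_tens Wh Vh.
  have h1V : adjmx ((1%:M : 'M[C]_k) *t V) = 1%:M *t V by rewrite adjmx_tens Vh adjmx1.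
  set Z := Gmap gamma (W *m Y *m W).
  have HZ : Z = V *m Z *m V.
    apply: tr_ext => D.
    rewrite -![in RHS]mulmxA [in RHS]mxtrace_mulC -[in RHS]mulmxA /Z !Gtr.
    have -> : W *m Y *m W *t (V *m D *m V) = (W *t V) *m (Y *t D) *m (W *t V).
      by rewrite !tensmx_mul.
    have -> : W *m Y *m W *t D = (W *t 1%:M) *m (Y *t D) *m (W *t 1%:M).
      by rewrite !tensmx_mul mulmx1 mul1mx.
    by rewrite HL (sandwich _ E1 hW1 hWV).
  exists (Fmap gamma Z); apply: tr_ext => D.
  rewrite -![in RHS]mulmxA [in RHS]mxtrace_mulC -[in RHS]mulmxA [in RHS]mxtrace_mulC.
  rewrite [in LHS]mxtrace_mulC /Z !Ftr -/Z HZ.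
  have -> : W *m D *m W *t (V *m Z *m V) = (W *t V) *m (D *t Z) *m (W *t V).
    by rewrite !tensmx_mul.
  have -> : D *t (V *m Z *m V) = (1%:M *t V) *m (D *t Z) *m (1%:M *t V).
    by rewrite !tensmx_mul mulmx1 mul1mx.
  by rewrite HL (sandwich _ E2 h1V hWV).
Qed.

End Main.

Theorem mainTheorem2 (R : realType) (k m : nat)
  (gamma : 'M[R[i]]_(k * m)) (W : 'M[R[i]]_k) :
  is_state gamma -> is_orth_proj W ->
  ((forall X : 'M[R[i]]_k, in_corner W X -> in_corner W (Fmap gamma (Gmap gamma X)))
   <->
   exists V : 'M[R[i]]_m, is_orth_proj V /\
     \tr (gamma *m (W *t (1%:M - V))) = 0 /\
     \tr (gamma *m ((1%:M - W) *t V)) = 0).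
Proof. exact: main_gen. Qed.
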